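(* Let $(\mathfrak{g},[\cdot,\cdot]_{\mathfrak{g}})$ be a Leibniz algebra, $(V;\rho^L,\rho^R)$ a representation, and $T:V\to\mathfrak{g}$ a relative Rota-Baxter operator. Then for every $n\ge1$ and every $f\in\mathrm{Hom}(\otimes^nV,\mathfrak{g})$, $\partial_Tf=(-1)^{n-1}\{T,f\}$.
   Context: A Leibniz algebra is a vector space $\mathfrak{g}$ with bilinear $[\cdot,\cdot]_{\mathfrak{g}}$ satisfying $[x,[y,z]_{\mathfrak{g}}]_{\mathfrak{g}}=[[x,y]_{\mathfrak{g}},z]_{\mathfrak{g}}+[y,[x,z]_{\mathfrak{g}}]_{\mathfrak{g}}$. A representation $(V;\rho^L,\rho^R)$: linear $\rho^L,\rho^R:\mathfrak{g}\to\mathfrak{gl}(V)$ with $\rho^L([x,y]_{\mathfrak{g}})=[\rho^L(x),\rho^L(y)]$, $\rho^R([x,y]_{\mathfrak{g}})=[\rho^L(x),\rho^R(y)]$, $\rho^R(y)\rho^L(x)=-\rho^R(y)\rho^R(x)$. A relative Rota-Baxter operator is a linear $T:V\to\mathfrak{g}$ with $[Tv_1,Tv_2]_{\mathfrak{g}}=T(\rho^L(Tv_1)v_2+\rho^R(Tv_2)v_1)$. $C^n(V,\mathfrak{g})=\mathrm{Hom}(\otimes^nV,\mathfrak{g})$, and $\partial_T:C^n\to C^{n+1}$ is $(\partial_Tf)(v_1,\dots,v_{n+1})=\sum_{i=1}^n(-1)^{i+1}[Tv_i,f(v_1,\dots,\hat v_i,\dots,v_{n+1})]_{\mathfrak{g}}-\sum_{i=1}^n(-1)^{i+1}T\rho^R(f(v_1,\dots,\hat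 v_i,\dots,v_{n+1}))v_i+(-1)^{n+1}[f(v_1,\dots,v_n),Tv_{n+1}]_{\mathfrak{g}}+(-1)^nT\rho^L(f(v_1,\dots,v_n))v_{n+1}+\sum_{1\le i<j\le n+1}(-1)^if(v_1,\dots,\hat v_i,\dots,v_{j-1},\rho^L(Tv_i)v_j+\rho^R(Tv_j)v_i,v_{j+1},\dots,v_{n+1})$. A permutation $\sigma\in\mathbb{S}_N$ is an $(i_1,\dots,i_k)$-shuffle ($i_1+\dots+i_k=N$) if it is increasing on each of the consecutive blocks of positions of sizes $i_1,\dots,i_k$; $\mathbb{S}_{(i_1,\dots,i_k)}$ is the set of these, $(-1)^\sigma$ the sign. The bracket $\{\cdot,\cdot\}$ on $\bigoplus_{n\ge1}C^n(V,\mathfrak{g})$ is defined for $g_1\in C^m$, $g_2\in C^n$ by $\{g_1,g_2\}(v_1,\dots,v_{m+n})=$ $\sum_{k=1}^m\sum_{\sigma\in\mathbb{S}_{(k-1,n)}}(-1)^{(k-1)n+1}(-1)^\sigma g_1(v_{\sigma(1)},\dots,v_{\sigma(k-1)},\rho^L(g_2(v_{\sigma(k)},\dots,v_{\sigma(k+n-1)}))v_{k+n},v_{k+n+1},\dots,v_{m+n})$ $+\sum_{k=2}^{m+1}\sum_{\sigma\in\mathbb{S}_{(k-2,n,1)},\,\sigma(k+n-2)=k+n-1}(-1)^{kn}(-1)^\sigma g_1(v_{\sigma(1)},\dots,v_{\sigma(k-2)},\rho^R(g_2(v_{\sigma(k-1)},\dots,v_{\sigma(k+n-2)}))v_{\sigma(k+n-1)},v_{k+n},\dots,v_{m+n})$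 $+\sum_{k=1}^m\sum_{\sigma\in\mathbb{S}_{(k-1,n-1)}}(-1)^{(k-1)n}(-1)^\sigma[g_2(v_{\sigma(k)},\dots,v_{\sigma(k+n-2)},v_{k+n-1}),g_1(v_{\sigma(1)},\dots,v_{\sigma(k-1)},v_{k+n},\dots,v_{m+n})]_{\mathfrak{g}}$ $+\sum_{\sigma\in\mathbb{S}_{(m,n-1)}}(-1)^{mn+1}(-1)^\sigma[g_1(v_{\sigma(1)},\dots,v_{\sigma(m)}),g_2(v_{\sigma(m+1)},\dots,v_{\sigma(m+n-1)},v_{m+n})]_{\mathfrak{g}}$ $+\sum_{k=1}^n\sum_{\sigma\in\mathbb{S}_{(k-1,m)}}(-1)^{m(k+n-1)}(-1)^\sigma g_2(v_{\sigma(1)},\dots,v_{\sigma(k-1)},\rho^L(g_1(v_{\sigma(k)},\dots,v_{\sigma(k+m-1)}))v_{k+m},v_{k+m+1},\dots,v_{m+n})$ $+\sum_{k=1}^n\sum_{\sigma\in\mathbb{S}_{(k-1,m,1)},\,\sigma(k+m-1)=k+m}(-1)^{m(k+n-1)+1}(-1)^\sigma g_2(v_{\sigma(1)},\dots,v_{\sigma(k-1)},\rho^R(g_1(v_{\sigma(k)},\dots,v_{\sigma(k+m-1)}))v_{\sigma(k+m)},v_{k+m+1},\dots,v_{m+n})$. Here $T$ is regarded as an element of $C^1(V,\mathfrak{g})$. *)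

(* Defs.v *)
From HB Require Import structures.
From mathcomp Require Import all_boot all_order all_algebra.
From mathcomp Require Import perm.
Set Implicit Arguments. Unset Strict Implicit. Unset Printing Implicit Defensive.
Import GRing.Theory.
Local Open Scope ring_scope.

Section LeibnizDefs.
Variables (K : fieldType) (g V : lmodType K).

Definition is_leibniz (br : g -> g -> g) : Prop :=
  [/\ (forall a x y z, br (a *: x + y) z = a *: br x z + br y z),
      (forall a x y z, br z (a *: x + y) = a *: br z x + br z y) &
      (forall x y z, br x (br y z) = br (br x y) z + br y (br x z))].

Definition is_rep (br : g -> g -> g) (rhoL rhoR : g -> V -> V) : Prop :=
  [/\ (forall a x y v, rhoL (a *: x + y) v = a *: rhoL x v + rhoL y v),
      (forall a x y v, rhoR (a *: x + y) v = a *: rhoR x v + rhoR y v),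
      (forall x a u v, rhoL x (a *: u + v) = a *: rhoL x u + rhoL x v) &
      (forall x a u v, rhoR x (a *: u + v) = a *: rhoR x u + rhoR x v)] /\
  [/\ (forall x y v, rhoL (br x y) v = rhoL x (rhoL y v) - rhoL y (rhoL x v)),
      (forall x y v, rhoR (br x y) v = rhoL x (rhoR y v) - rhoR y (rhoL x v)) &
      (forall x y v, rhoR y (rhoL x v) = - rhoR y (rhoR x v))].

Definition is_relRB (br : g -> g -> g) (rhoL rhoR : g -> V -> V) (T : V -> g)
  : Prop :=
  (forall a u v, T (a *: u + v) = a *: T u + T v) /\
  (forall v1 v2, br (T v1) (T v2) = T (rhoL (T v1) v2 + rhoR (T v2) v1)).

(* n-cochains Hom(⊗^n V, g): maps on lists of length n, linear in each slot. *)
Definition multilinear (n : nat) (f : seq V -> g) : Prop :=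
  forall (s : seq V) (i : nat) (a : K) (x y : V),
    size s = n -> (i < n)%N ->
    f (set_nth 0 s i (a *: x + y)) =
      a *: f (set_nth 0 s i x) + f (set_nth 0 s i y).

Definition cochain1 (T : V -> g) : seq V -> g := fun s => T (nth 0 s 0).

(* 1-based argument access: v_k = nth 0 s (k-1). *)
Definition varg (s : seq V) (k : nat) : V := nth 0 s k.-1.

(* A permutation of 'I_N viewed on 1-based indices (identity outside 1..N). *)
Definition perm1 (N : nat) (σ : 'S_N) (j : nat) : nat :=
  match (insub j.-1 : option 'I_N) with
  | Some i => (val (σ i)).+1
  | None => j
  end.

(* sigma in S_(i_1,...,i_k): increasing on each consecutive block of positions. *)
Definition is_shuffle (l : seq nat) (σ : 'S_(sumn l)) : bool :=
  all (fun b => all (fun j => (perm1 σ j < perm1 σ j.+1)%N)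
                    (iota (sumn (take b l)).+1 (nth 0%N l b).-1))
      (iota 0 (size l)).

(* \sum_{σ ∈ S_(l), Q σ} (-1)^σ F σ, with σ passed as a 1-based index map. *)
Definition shsum (l : seq nat) (Q : (nat -> nat) -> bool)
    (F : (nat -> nat) -> g) : g :=
  \sum_(σ : 'S_(sumn l) | is_shuffle σ && Q (perm1 σ))
     (-1) ^+ odd_perm σ *: F (perm1 σ).

Variables (br : g -> g -> g) (rhoL rhoR : g -> V -> V).

Definition lbracket (m n : nat) (g1 g2 : seq V -> g) (s : seq V) : g :=
  let v := varg s in
  \sum_(1 <= k < m.+1) (-1) ^+ (k.-1 * n + 1)%N *:
     shsum [:: k.-1; n] xpredT (fun σ =>
       g1 ([seq v (σ j) | j <- iota 1 k.-1] ++
           rhoL (g2 [seq v (σ j) | j <- iota k n]) (v (k + n)%N) ::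
           [seq v j | j <- iota (k + n)%N.+1 (m - k)%N]))
  + \sum_(2 <= k < m.+2) (-1) ^+ (k * n)%N *:
     shsum [:: (k - 2)%N; n; 1%N] (fun σ => σ (k + n - 2)%N == (k + n - 1)%N) (fun σ =>
       g1 ([seq v (σ j) | j <- iota 1 (k - 2)%N] ++
           rhoR (g2 [seq v (σ j) | j <- iota k.-1 n]) (v (σ (k + n - 1)%N)) ::
           [seq v j | j <- iota (k + n)%N (m + 1 - k)%N]))
  + \sum_(1 <= k < m.+1) (-1) ^+ (k.-1 * n)%N *:
     shsum [:: k.-1; n.-1] xpredT (fun σ =>
       br (g2 ([seq v (σ j) | j <- iota k n.-1] ++ [:: v (k + n - 1)%N]))
          (g1 ([seq v (σ j) | j <- iota 1 k.-1] ++
               [seq v j | j <- iota (k + n)%N (m - k)%N.+1])))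
  + (-1) ^+ (m * n + 1)%N *:
     shsum [:: m; n.-1] xpredT (fun σ =>
       br (g1 [seq v (σ j) | j <- iota 1 m])
          (g2 ([seq v (σ j) | j <- iota m.+1 n.-1] ++ [:: v (m + n)%N])))
  + \sum_(1 <= k < n.+1) (-1) ^+ (m * (k + n - 1))%N *:
     shsum [:: k.-1; m] xpredT (fun σ =>
       g2 ([seq v (σ j) | j <- iota 1 k.-1] ++
           rhoL (g1 [seq v (σ j) | j <- iota k m]) (v (k + m)%N) ::
           [seq v j | j <- iota (k + m)%N.+1 (n - k)%N]))
  + \sum_(1 <= k < n.+1) (-1) ^+ (m * (k + n - 1) + 1)%N *:
     shsum [:: k.-1; m; 1%N] (fun σ => σ (k + m - 1)%N == (k + m)%N) (fun σ =>
       g2 ([seq v (σ j) | j <- iota 1 k.-1] ++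
           rhoR (g1 [seq v (σ j) | j <- iota k m]) (v (σ (k + m)%N)) ::
           [seq v j | j <- iota (k + m)%N.+1 (n - k)%N])).

Definition dT (T : V -> g) (n : nat) (f : seq V -> g) (s : seq V) : g :=
  let v := varg s in
  let hat i := [seq v j | j <- iota 1 n.+1 & j != i] in
  \sum_(1 <= i < n.+1) (-1) ^+ i.+1 *: br (T (v i)) (f (hat i))
  - \sum_(1 <= i < n.+1) (-1) ^+ i.+1 *: T (rhoR (f (hat i)) (v i))
  + (-1) ^+ n.+1 *: br (f [seq v j | j <- iota 1 n]) (T (v n.+1))
  + (-1) ^+ n *: T (rhoL (f [seq v j | j <- iota 1 n]) (v n.+1))
  + \sum_(1 <= i < n.+2) \sum_(i.+1 <= j < n.+2) (-1) ^+ i *: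
      f ([seq v l | l <- iota 1 j.-1 & l != i] ++
         (rhoL (T (v i)) (v j) + rhoR (T (v j)) (v i)) ::
         [seq v l | l <- iota j.+1 (n.+1 - j)%N]).
End LeibnizDefs.

(* Main.v *)
Require Import Defs.
From mathcomp Require Import all_boot all_order all_algebra.
From mathcomp Require Import perm zify.
Set Implicit Arguments. Unset Strict Implicit. Unset Printing Implicit Defensive.
Import GRing.Theory.
Local Open Scope ring_scope.

Notation P1 := Defs.perm1.

Lemma P1E N (σ : 'S_N) (i : 'I_N) : P1 σ i.+1 = (σ i).+1.
Proof.
rewrite /Defs.perm1 /= (insubT (fun j => (j < N)%N) (ltn_ord i)) /=.
by congr (_.+1); congr (val (σ _)); apply: val_inj.
Qed.

Lemma P1_1 N j : (0 < j)%N -> P1 (1%g : 'S_N) j = j.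
Proof.
move=> j0; rewrite /Defs.perm1; case: insubP => [i _ e|] //=.
by rewrite perm.perm1 e prednK.
Qed.

Definition inc N (σ : 'S_N) a L := all (fun j => (P1 σ j < P1 σ j.+1)%N) (iota a L).

Lemma incP N (σ : 'S_N) a L :
  reflect (forall j, (a <= j < a + L)%N -> (P1 σ j < P1 σ j.+1)%N) (inc σ a L).
Proof.
apply: (iffP allP) => H j Hj; apply: H; by rewrite mem_iota in Hj *.
Qed.

Lemma chain (h : nat -> nat) a b : (forall j, (a <= j < b)%N -> (h j < h j.+1)%N) ->
  forall i j, (a <= i)%N -> (i < j)%N -> (j <= b)%N -> (h i < h j)%N.
Proof.
move=> H i j ai; elim: j => // j IH; rewrite ltnS leq_eqVlt => /orP [/eqP <- jb|ij jb].
  by apply: H; lia.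
apply: (ltn_trans (IH ij (ltnW jb))); apply: H; lia.
Qed.

Lemma perm_uniq_block N (σ τ : 'S_N) (B : pred 'I_N) :
  (forall i, ~~ B i -> σ i = τ i) ->
  (forall i j, B i -> B j -> (i < j)%N -> (σ i < σ j)%N) ->
  (forall i j, B i -> B j -> (i < j)%N -> (τ i < τ j)%N) -> σ = τ.
Proof.
move=> Hout Hs Ht.
have key : forall (s1 s2 : 'S_N), (forall i, ~~ B i -> s1 i = s2 i) ->
  (forall i j, B i -> B j -> (i < j)%N -> (s1 i < s1 j)%N) ->
  (forall i j, B i -> B j -> (i < j)%N -> (s2 i < s2 j)%N) ->
  forall i, B i -> (forall j, B j -> (j < i)%N -> s1 j = s2 j) -> ~~ (s1 i < s2 i)%N.
  move=> s1 s2 Hout0 Hs0 Ht0 i Bi IH; apply/negP => lt.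
  set j' := (s2^-1 (s1 i))%g.
  have tj : s2 j' = s1 i by rewrite /j' permKV.
  case Bj: (B j'); last first.
    have := Hout0 j'; rewrite Bj => /(_ isT); rewrite tj => /perm_inj ji.
    by move: Bj; rewrite ji Bi.
  case: (ltngtP j' i) => c.
  - have := IH j' Bj c; rewrite tj => /perm_inj ji; by move: c; rewrite ji ltnn.
  - have := Ht0 _ _ Bi Bj c; rewrite tj => h; have := ltn_trans lt h; by rewrite ltnn.
  - have e : j' = i by apply: val_inj.
    by move: lt; rewrite -tj e ltnn.
have H : forall k (i : 'I_N), (i < k)%N -> B i -> σ i = τ i.
  elim=> // k IH i ik Bi.
  have IH' : forall j, B j -> (j < i)%N -> σ j = τ j.
    move=> j Bj ji; apply: IH => //; lia.
  have h1 := key σ τ Hout Hs Ht i Bi IH'.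
  have h2 := key τ σ (fun i h => esym (Hout i h)) Ht Hs i Bi (fun j a b => esym (IH' j a b)).
  apply: val_inj; apply/eqP; rewrite eqn_leq; rewrite -!ltnNge in h1 h2; by rewrite -ltnS h2 -ltnS h1.
apply/permP => i; case Bi: (B i); last by apply: Hout; rewrite Bi.
by apply: (H i.+1).
Qed.

Lemma perm_uniq_inc N (σ τ : 'S_N) a L : (0 < a)%N ->
  inc σ a L -> inc τ a L ->
  (forall i : 'I_N, ~~ (a <= i.+1 <= a + L)%N -> σ i = τ i) -> σ = τ.
Proof.
move=> a0 /incP Hs /incP Ht Ho.
apply: (perm_uniq_block (B := fun i : 'I_N => (a <= i.+1 <= a + L)%N)) => //.
  move=> i j /andP[Bi1 Bi2] /andP[Bj1 Bj2] ij; rewrite -ltnS -!P1E.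
  by apply: (chain Hs) => //; lia.
move=> i j /andP[Bi1 Bi2] /andP[Bj1 Bj2] ij; rewrite -ltnS -!P1E.
by apply: (chain Ht) => //; lia.
Qed.

Definition rotE M (i : 'I_M.+1) : 'S_M.+1 := lift_perm ord_max i 1.
Definition rotC M (i : 'I_M.+1) : 'S_M.+1 := lift_perm ord0 i 1.

Lemma rotE_last M (i : 'I_M.+1) : P1 (rotE i) M.+1 = i.+1.
Proof. by rewrite (P1E _ ord_max) /rotE lift_perm_id. Qed.

Lemma rotE_P1 M (i : 'I_M.+1) j : (0 < j <= M)%N ->
  P1 (rotE i) j = if (j <= i)%N then j else j.+1.
Proof.
move=> /andP[j0 jM].
have pM : (j.-1 < M)%N by lia.
have -> : j = (Ordinal (ltnW pM : (j.-1 < M.+1)%N)).+1 by rewrite /= prednK.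
rewrite P1E /rotE.
have -> : Ordinal (ltnW pM : (j.-1 < M.+1)%N) = lift ord_max (Ordinal pM).
  by apply: val_inj; rewrite /= /bump; case: leqP => //; lia.
rewrite lift_perm_lift perm.perm1 /= /bump; case: leqP; case: leqP; lia.
Qed.

Lemma rotC_first M (i : 'I_M.+1) : P1 (rotC i) 1 = i.+1.
Proof. by rewrite (P1E _ ord0) /rotC lift_perm_id. Qed.

Lemma rotC_P1 M (i : 'I_M.+1) j : (1 < j <= M.+1)%N ->
  P1 (rotC i) j = if (j <= i.+1)%N then j.-1 else j.
Proof.
move=> /andP[j0 jM].
have pM : (j.-2 < M)%N by lia.
have -> : j = (lift ord0 (Ordinal pM)).+1 by rewrite /= /bump /=; lia.
rewrite P1E /rotC lift_perm_lift perm.perm1 /= /bump; case: leqP; case: leqP; lia.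
Qed.

Lemma sign_rotE (R : pzRingType) M (i : 'I_M.+1) :
  (-1) ^+ odd_perm (rotE i) = (-1) ^+ (M + i)%N :> R.
Proof. by rewrite /rotE odd_lift_perm odd_perm1 addbF signr_addb !signr_odd exprD. Qed.

Lemma sign_rotC (R : pzRingType) M (i : 'I_M.+1) :
  (-1) ^+ odd_perm (rotC i) = (-1) ^+ i :> R.
Proof. by rewrite /rotC odd_lift_perm odd_perm1 addbF /= signr_odd. Qed.


Lemma inc_rotE M (i : 'I_M.+1) : inc (rotE i) 1 M.-1.
Proof.
apply/incP => j Hj; rewrite !rotE_P1; try lia.
case: (leqP j i); case: (ltnP j i); lia.
Qed.

Lemma rotE_char M (σ : 'S_M.+1) : inc σ 1 M.-1 -> σ = rotE (σ ord_max).
Proof.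
move=> H; apply: (perm_uniq_inc (a := 1) (L := M.-1)) => //; first exact: inc_rotE.
move=> i Hi; have -> : i = ord_max by apply: val_inj => /=; have := ltn_ord i; lia.
by rewrite /rotE lift_perm_id.
Qed.

Lemma inc_rotC M (i : 'I_M.+1) : inc (rotC i) 2 M.-1.
Proof.
apply/incP => j Hj; rewrite !rotC_P1; try lia.
case: (leqP j i.+1); case: (leqP j.+1 i.+1); lia.
Qed.

Lemma rotC_char M (σ : 'S_M.+1) : inc σ 2 M.-1 -> σ = rotC (σ ord0).
Proof.
move=> H; apply: (perm_uniq_inc (a := 2) (L := M.-1)) => //; first exact: inc_rotC.
move=> i Hi; have -> : i = ord0 by apply: val_inj => /=; have := ltn_ord i; lia.
by rewrite /rotC lift_perm_id.
Qed.

Lemma inc_1 N a L : (0 < a)%N -> inc (1%g : 'S_N) a L.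
Proof. move=> a0; apply/incP => j Hj; rewrite !P1_1; lia. Qed.

Lemma id_char N (σ : 'S_N) : inc σ 1 N.-1 -> σ = 1%g.
Proof.
move=> H; apply: (perm_uniq_inc (a := 1) (L := N.-1)) => //; first exact: inc_1.
move=> i; have := ltn_ord i; lia.
Qed.

Lemma inc_mono N (σ : 'S_N) a L L' : (L' <= L)%N -> inc σ a L -> inc σ a L'.
Proof. move=> LL /incP H; apply/incP => j Hj; apply: H; lia. Qed.

Lemma inc_ext M (σ : 'S_M.+1) : (0 < M)%N -> inc σ 1 M.-2 -> P1 σ M = M.+1 -> inc σ 1 M.-1.
Proof.
move=> M0 /incP H HM; apply/incP => j Hj.
case: (ltnP j M.-1) => jM; first by apply: H; lia.
have -> : j = M.-1 by lia.
rewrite prednK //.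
have pM : (M.-2 < M.+1)%N by lia.
have qM : (M.-1 < M.+1)%N by lia.
have e1 : M.-1 = (Ordinal pM).+1 by rewrite /=; lia.
have e2 : M = (Ordinal qM).+1 by rewrite /=; lia.
rewrite {1}e1 P1E HM.
have := P1E σ (Ordinal qM); rewrite -e2 HM => -[e3].
have ne : σ (Ordinal pM) != σ (Ordinal qM).
  by rewrite (inj_eq perm_inj); apply/eqP => /(congr1 val) /=; lia.
have := ltn_ord (σ (Ordinal pM)); move: ne; rewrite -val_eqE /= -e3; lia.
Qed.

Section Sums.
Variables (K : fieldType) (g : lmodType K).

Lemma sum_reindex M (h : 'I_M.+1 -> 'S_M.+1) (h' : 'S_M.+1 -> 'I_M.+1)
  (X : 'S_M.+1 -> bool) (Q : (nat -> nat) -> bool) (F : (nat -> nat) -> g) :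
  (forall i, h' (h i) = i) ->
  (forall σ, X σ -> Q (P1 σ) -> σ = h (h' σ)) ->
  (forall i, Q (P1 (h i)) -> X (h i)) ->
  \sum_(σ : 'S_M.+1 | X σ && Q (P1 σ)) (-1) ^+ odd_perm σ *: F (P1 σ) =
  \sum_(i < M.+1 | Q (P1 (h i))) (-1) ^+ odd_perm (h i) *: F (P1 (h i)).
Proof.
move=> hK Hc HX.
rewrite (reindex_onto h h' (F := fun σ => (-1) ^+ odd_perm σ *: F (P1 σ))); last first.
  by move=> σ /andP[a b]; rewrite -Hc.
apply: eq_bigl => i; rewrite hK eqxx andbT.
by case Q1: (Q _); rewrite ?andbF // HX.
Qed.

Lemma sum_id N (X : 'S_N -> bool) (Q : (nat -> nat) -> bool) (F : (nat -> nat) -> g) :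
  (forall σ, X σ -> σ = 1%g) -> X 1%g -> Q (P1 (1%g : 'S_N)) ->
  \sum_(σ : 'S_N | X σ && Q (P1 σ)) (-1) ^+ odd_perm σ *: F (P1 σ) = F (P1 (1%g : 'S_N)).
Proof.
move=> Hc X1 Q1.
rewrite (big_pred1 (1%g : 'S_N)) ?odd_perm1 ?expr0 ?scale1r // => σ.
apply/andP/eqP => [[/Hc //]|->]; by split.
Qed.
End Sums.

Section Lists.
Variable X : Type.
Implicit Types w : nat -> X.

Lemma iotaSr a L : iota a L.+1 = iota a L ++ [:: a + L]%N.
Proof. by rewrite -addn1 iotaD. Qed.

Lemma filter_iota_last L :
  [seq j <- iota 1 L.+1 | j != L.+1] = iota 1 L.
Proof.
rewrite iotaSr filter_cat /= add1n eqxx cats0.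
rewrite (eq_in_filter (a2 := predT)) ?filter_predT // => j; rewrite mem_iota /= => Hj.
by apply/negP => /eqP; lia.
Qed.

Lemma map_P1_id N w a L : (0 < a)%N ->
  [seq w (P1 (1%g : 'S_N) j) | j <- iota a L] = [seq w j | j <- iota a L].
Proof.
move=> a0; apply/eq_in_map => j; rewrite mem_iota => Hj; rewrite P1_1 //; lia.
Qed.

Lemma map_rotE w M (i : 'I_M.+1) L : (i <= L <= M)%N ->
  [seq w (P1 (rotE i) j) | j <- iota 1 L] = [seq w j | j <- iota 1 L.+1 & j != i.+1].
Proof.
move=> /andP[iL LM]; have [d ed] : exists d, L = (i + d)%N by exists (L - i)%N; lia.
subst L; clear iL; elim: d LM => [|d IH] LM.
  rewrite addn0 filter_iota_last; apply/eq_in_map => j; rewrite mem_iota => Hj.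
  by rewrite rotE_P1; [case: leqP => //; lia | lia].
rewrite addnS iotaSr map_cat IH; last by lia.
rewrite (iotaSr 1 (i + d).+1) filter_cat map_cat.
have -> : [seq j <- [:: (1 + (i + d).+1)%N] | j != i.+1] = [:: (1 + (i + d).+1)%N].
  by rewrite /= ifT //; apply/eqP; lia.
congr (_ ++ _); rewrite /= rotE_P1; last by lia.
rewrite ifF; last by apply/negbTE; lia.
by congr [:: w _]; lia.
Qed.

Lemma map_rotC w M (i : 'I_M.+1) L : (i <= L <= M)%N ->
  [seq w (P1 (rotC i) j) | j <- iota 2 L] = [seq w j | j <- iota 1 L.+1 & j != i.+1].
Proof.
move=> /andP[iL LM]; have [d ed] : exists d, L = (i + d)%N by exists (L - i)%N; lia.
subst L; clear iL; elim: d LM => [|d IH] LM.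
  rewrite addn0 filter_iota_last.
  rewrite (_ : map _ _ = map (fun j => w j.-1) (iota 2 i)); last first.
    apply/eq_in_map => j; rewrite mem_iota => Hj.
    by rewrite rotC_P1; [case: leqP => //; lia | lia].
  by rewrite (iotaDl 1 1) -map_comp.
rewrite addnS (iotaSr 2) map_cat IH; last by lia.
rewrite (iotaSr 1 (i + d).+1) filter_cat map_cat.
have -> : [seq j <- [:: (1 + (i + d).+1)%N] | j != i.+1] = [:: (1 + (i + d).+1)%N].
  by rewrite /= ifT //; apply/eqP; lia.
congr (_ ++ _); rewrite /= rotC_P1; last by lia.
rewrite ifF; last by apply/negbTE; lia.
by congr [:: w _]; lia.
Qed.
End Lists.

Definition shb (l : seq nat) N (σ : 'S_N) :=
  all (fun b => all (fun j => (P1 σ j < P1 σ j.+1)%N)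
                    (iota (sumn (take b l)).+1 (nth 0%N l b).-1))
      (iota 0 (size l)).

Section Terms.
Variables (K : fieldType) (g : lmodType K).
Implicit Types (F : (nat -> nat) -> g).

Lemma shsumE l N Q F : sumn l = N ->
  shsum l Q F = \sum_(σ : 'S_N | shb l σ && Q (P1 σ)) (-1) ^+ odd_perm σ *: F (P1 σ).
Proof. by move=> <-. Qed.

Lemma shsum_T1 n F : shsum [:: 0%N; n] xpredT F = F (P1 (1%g : 'S_n)).
Proof.
rewrite (shsumE _ _ (N := n)); last by rewrite /= addn0.
rewrite (@sum_id K g n (@shb [:: 0%N; n] n) xpredT F) => //.
- by move=> σ; rewrite /shb /= andbT => /id_char.
- by rewrite /shb /= andbT; apply: inc_1.
Qed.

Lemma shsum_T2 n F : (0 < n)%N ->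
  shsum [:: 0%N; n; 1%N] (fun σ => σ n == n.+1) F =
  \sum_(i < n.+1 | (i < n)%N) (-1) ^+ (n + i)%N *: F (P1 (rotE i)).
Proof.
move=> n0; rewrite (shsumE _ _ (N := n.+1)); last by rewrite /= addn1.
rewrite (sum_reindex (h := @rotE n) (h' := fun σ => σ ord_max) (X := @shb [:: 0%N; n; 1%N] n.+1) (Q := fun σ => σ n == n.+1) F).
- apply: eq_big => i.
    rewrite rotE_P1; last lia.
    by case: (leqP n i) => h; rewrite ?eqxx // eqn_leq ltnn andbF.
  by move=> _; rewrite sign_rotE.
- by move=> i; rewrite /rotE lift_perm_id.
- by move=> σ; rewrite /shb /= andbT => /rotE_char.
- by move=> i _; rewrite /shb /= andbT; apply: inc_rotE.
Qed.

Lemma shsum_T3 n F : shsum [:: 0%N; n.-1] xpredT F = F (P1 (1%g : 'S_n.-1)).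
Proof. exact: shsum_T1. Qed.

Lemma shsum_T4 n F :
  shsum [:: 1%N; n.-1] xpredT F =
  \sum_(i < n.-1.+1) (-1) ^+ i *: F (P1 (rotC i)).
Proof.
rewrite (shsumE _ _ (N := n.-1.+1)); last by rewrite /= addn0.
rewrite (sum_reindex (h := @rotC n.-1) (h' := fun σ => σ ord0) (X := @shb [:: 1%N; n.-1] n.-1.+1) (Q := xpredT) F).
- by apply: eq_bigr => i _; rewrite sign_rotC.
- by move=> i; rewrite /rotC lift_perm_id.
- by move=> σ; rewrite /shb /= andbT => /rotC_char.
- by move=> i _; rewrite /shb /= andbT; apply: inc_rotC.
Qed.

Lemma shsum_T5 k F :
  shsum [:: k.-1; 1%N] xpredT F =
  \sum_(i < k.-1.+1) (-1) ^+ (k.-1 + i)%N *: F (P1 (rotE i)).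
Proof.
rewrite (shsumE _ _ (N := k.-1.+1)); last by rewrite /= addn1.
rewrite (sum_reindex (h := @rotE k.-1) (h' := fun σ => σ ord_max) (X := @shb [:: k.-1; 1%N] k.-1.+1) (Q := xpredT) F).
- by apply: eq_bigr => i _; rewrite sign_rotE.
- by move=> i; rewrite /rotE lift_perm_id.
- by move=> σ; rewrite /shb /= andbT => /rotE_char.
- by move=> i _; rewrite /shb /= andbT; apply: inc_rotE.
Qed.

Lemma shsum_T6 k F : (0 < k)%N ->
  shsum [:: k.-1; 1%N; 1%N] (fun σ => σ k == k.+1) F =
  \sum_(i < k.+1 | (i < k)%N) (-1) ^+ (k + i)%N *: F (P1 (rotE i)).
Proof.
move=> k0; rewrite (shsumE _ _ (N := k.+1)); last by rewrite /=; lia.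
rewrite (sum_reindex (h := @rotE k) (h' := fun σ => σ ord_max) (X := @shb [:: k.-1; 1%N; 1%N] k.+1) (Q := fun σ => σ k == k.+1) F).
- apply: eq_big => i.
    rewrite rotE_P1; last lia.
    by case: (leqP k i) => h; rewrite ?eqxx // eqn_leq ltnn andbF.
  by move=> _; rewrite sign_rotE.
- by move=> i; rewrite /rotE lift_perm_id.
- move=> σ; rewrite /shb /= => Hs /eqP Hk; apply: rotE_char.
  apply: inc_ext => //; move: Hs; by rewrite andbT.
- move=> i _; rewrite /shb /= andbT.
  apply: (inc_mono (L := k.-1)); [lia | apply: inc_rotE].
Qed.
End Terms.

Lemma sgnE (R : pzRingType) a b : odd a = odd b -> (-1) ^+ a = (-1) ^+ b :> R.
Proof. by move=> e; rewrite -signr_odd e signr_odd. Qed.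

Section NF.
Variables (K : fieldType) (g V : lmodType K).
Variables (br : g -> g -> g) (rhoL rhoR : g -> V -> V) (T : V -> g) (f : seq V -> g).
Variable v : nat -> V.

Lemma sum_ord_lt (G : nat -> g) n : \sum_(i < n.+1 | (i < n)%N) G i = \sum_(i < n) G i.
Proof.
rewrite big_mkcond big_ord_recr /= ltnn addr0; apply: eq_bigr => i _.
by rewrite ltn_ord.
Qed.

Lemma sum_ord_cast (G : nat -> g) a b : a = b -> \sum_(i < a) G i = \sum_(i < b) G i.
Proof. by move->. Qed.

Lemma E1 n : shsum [:: 1.-1; n] xpredT (fun σ => cochain1 T
   ([seq v (σ j) | j <- iota 1 1.-1] ++ rhoL (f [seq v (σ j) | j <- iota 1 n]) (v (1 + n)%N)
     :: [seq v j | j <- iota (1 + n).+1 (1 - 1)])) =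
  T (rhoL (f [seq v j | j <- iota 1 n]) (v n.+1)).
Proof. by rewrite shsum_T1 /cochain1 /= map_P1_id. Qed.


Lemma filter_snoc n i : (i < n)%N ->
  [seq v j | j <- iota 1 n & j != i.+1] ++ [:: v n.+1] =
  [seq v j | j <- iota 1 n.+1 & j != i.+1].
Proof.
move=> inn; rewrite (iotaSr 1 n) filter_cat map_cat /= add1n.
by rewrite ifT //; apply/eqP; lia.
Qed.

Lemma filter_snoc2 n i : (0 < n)%N -> (i < n)%N ->
  [seq v j | j <- iota 1 n.-1.+1 & j != i.+1] ++ [:: v n.+1] =
  [seq v j | j <- iota 1 n.+1 & j != i.+1].
Proof. by move=> n0 inn; rewrite prednK //; apply: filter_snoc. Qed.

Lemma E2 n : (0 < n)%N ->
  shsum [:: (2 - 2)%N; n; 1%N] (fun σ => σ (2 + n - 2)%N == (2 + n - 1)%N)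
   (fun σ => cochain1 T ([seq v (σ j) | j <- iota 1 (2 - 2)] ++
      rhoR (f [seq v (σ j) | j <- iota 2.-1 n]) (v (σ (2 + n - 1)%N))
      :: [seq v j | j <- iota (2 + n) (1 + 1 - 2)])) =
  \sum_(i < n) (-1) ^+ (n + i)%N *: T (rhoR (f [seq v j | j <- iota 1 n.+1 & j != i.+1]) (v i.+1)).
Proof.
move=> n0.
have -> : (2 + n - 2 = n)%N by lia.
have -> : (2 + n - 1 = n.+1)%N by lia.
rewrite shsum_T2 //.
rewrite -(sum_ord_lt (fun i => (-1) ^+ (n + i)%N *:
   T (rhoR (f [seq v j | j <- iota 1 n.+1 & j != i.+1]) (v i.+1)))).
apply: eq_bigr => i Hi; rewrite /cochain1 /= rotE_last.
rewrite map_rotE //; have := ltn_ord i; lia.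
Qed.

Lemma E3 n : (0 < n)%N ->
  shsum [:: 1.-1; n.-1] xpredT (fun σ =>
     br (f ([seq v (σ j) | j <- iota 1 n.-1] ++ [:: v (1 + n - 1)%N]))
        (cochain1 T ([seq v (σ j) | j <- iota 1 1.-1] ++
            [seq v j | j <- iota (1 + n) (1 - 1).+1]))) =
  br (f [seq v j | j <- iota 1 n]) (T (v n.+1)).
Proof.
move=> n0; rewrite shsum_T3 /cochain1 /= map_P1_id //.
have -> : [seq v j | j <- iota 1 n] = [seq v j | j <- iota 1 n.-1] ++ [:: v n.-1.+1].
  by rewrite -{1}(prednK n0) iotaSr map_cat add1n.
by congr (br (f (_ ++ [:: v _])) (T (v _))); lia.
Qed.

Lemma E4 n : (0 < n)%N ->
  shsum [:: 1%N; n.-1] xpredT (fun σ =>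
     br (cochain1 T [seq v (σ j) | j <- iota 1 1])
        (f ([seq v (σ j) | j <- iota 2 n.-1] ++ [:: v (1 + n)%N]))) =
  \sum_(i < n) (-1) ^+ i *: br (T (v i.+1)) (f [seq v j | j <- iota 1 n.+1 & j != i.+1]).
Proof.
move=> n0; rewrite shsum_T4.
rewrite (eq_bigr (fun i : 'I_n.-1.+1 => (-1) ^+ i *: br (T (v i.+1))
   (f [seq v j | j <- iota 1 n.+1 & j != i.+1]))); last first.
  move=> i _; rewrite map_rotC; last by have := ltn_ord i; lia.
  rewrite add1n filter_snoc2 //; last by have := ltn_ord i; lia.
  by rewrite /cochain1 /= rotC_first.
apply: (sum_ord_cast (fun i => (-1) ^+ i *: br (T (v i.+1))
   (f [seq v j | j <- iota 1 n.+1 & j != i.+1]))); lia.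
Qed.

Lemma E5 n k : (0 < k <= n)%N ->
  shsum [:: k.-1; 1%N] xpredT (fun σ =>
     f ([seq v (σ j) | j <- iota 1 k.-1] ++
        rhoL (cochain1 T [seq v (σ j) | j <- iota k 1]) (v (k + 1)%N)
        :: [seq v j | j <- iota (k + 1).+1 (n - k)])) =
  \sum_(i < k) (-1) ^+ (k.-1 + i)%N *:
     f ([seq v j | j <- iota 1 k & j != i.+1] ++
        rhoL (T (v i.+1)) (v k.+1) :: [seq v j | j <- iota k.+2 (n - k)]).
Proof.
case: k => // k /andP[_ kn]; rewrite shsum_T5 /=.
apply: eq_bigr => i _; rewrite /cochain1 /= rotE_last map_rotE; last by have := ltn_ord i; lia.
by rewrite addn1.
Qed.

Lemma E6 n k : (0 < k <= n)%N ->
  shsum [:: k.-1; 1%N; 1%N] (fun σ => σ (k + 1 - 1)%N == (k + 1)%N) (fun σ =>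
     f ([seq v (σ j) | j <- iota 1 k.-1] ++
        rhoR (cochain1 T [seq v (σ j) | j <- iota k 1]) (v (σ (k + 1)%N))
        :: [seq v j | j <- iota (k + 1).+1 (n - k)])) =
  \sum_(i < k) (-1) ^+ (k + i)%N *:
     f ([seq v j | j <- iota 1 k & j != i.+1] ++
        rhoR (T (v k.+1)) (v i.+1) :: [seq v j | j <- iota k.+2 (n - k)]).
Proof.
move=> /andP[k0 kn].
have -> : (k + 1 - 1 = k)%N by lia.
rewrite addn1 shsum_T6 //.
rewrite -(sum_ord_lt (fun i => (-1) ^+ (k + i)%N *:
     f ([seq v j | j <- iota 1 k & j != i.+1] ++
        rhoR (T (v k.+1)) (v i.+1) :: [seq v j | j <- iota k.+2 (n - k)]))).
apply: eq_bigr => i Hi; rewrite /cochain1 /= rotE_last rotE_P1; last by lia.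
rewrite ifF; last by apply/negbTE; lia.
rewrite map_rotE; last by lia.
by rewrite prednK.
Qed.
End NF.

Section Assembly.
Variables (K : fieldType) (g V : lmodType K).

Lemma tri (G : nat -> nat -> g) a b :
  \sum_(a <= i < b) \sum_(i.+1 <= j < b) G i j = \sum_(a <= j < b) \sum_(a <= i < j) G i j.
Proof.
elim: b => [|b IH]; first by rewrite !big_geq.
case: (leqP a b) => ab; last by rewrite !big_geq.
rewrite big_nat_recr //= [in RHS]big_nat_recr //= [X in _ + X]big_geq // addr0 -IH.
rewrite -big_split /=; apply: eq_big_nat => i /andP[ai ib].
by rewrite big_nat_recr.
Qed.

Lemma size_filter_iota k i : (i < k)%N ->
  size [seq j <- iota 1 k | j != i.+1] = k.-1.
Proof.
move=> ik.
have h := count_predC (pred1 i.+1) (iota 1 k).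
have m : (i.+1 \in iota 1 k) = true by rewrite mem_iota; lia.
rewrite count_uniq_mem ?iota_uniq // m size_iota in h.
rewrite size_filter (@eq_count _ _ (predC (pred1 i.+1))) //.
by rewrite -[in RHS]h.
Qed.

Lemma fadd n (f : seq V -> g) (ls rs : seq V) a b : multilinear n f ->
  (size ls + (size rs).+1)%N = n ->
  f (ls ++ a :: rs) + f (ls ++ b :: rs) = f (ls ++ (a + b) :: rs).
Proof.
move=> fml hs.
have e : forall x, ls ++ x :: rs = set_nth 0 (ls ++ 0 :: rs) (size ls) x.
  move=> x; clear hs; elim: ls => [|y ls IH] //=; by rewrite IH.
rewrite (e a) (e b) (e (a + b)) -[in RHS](scale1r a) fml ?scale1r //.
  by rewrite size_cat /=.
lia.
Qed.
End Assembly.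

Lemma sgn2 (K : fieldType) (g : lmodType K) (x : g) a b d :
  odd (a + b) = odd d -> (-1) ^+ a *: ((-1) ^+ b *: x) = (-1) ^+ d *: x.
Proof. by move=> e; rewrite scalerA -exprD (sgnE _ e). Qed.

Lemma sgn3 (K : fieldType) (g : lmodType K) (x : g) a b c d :
  odd (a + b + c) = odd d ->
  (-1) ^+ a *: ((-1) ^+ b *: ((-1) ^+ c *: x)) = (-1) ^+ d *: x.
Proof. by move=> e; rewrite !scalerA -!exprD (sgnE _ e). Qed.

Lemma addr_AC6 (g : zmodType) (a1 a2 a3 a4 a5 a6 : g) :
  a4 + a2 + a3 + a1 + (a5 + a6) = a1 + a2 + a3 + a4 + a5 + a6.
Proof.
rewrite !addrA; congr (_ + _ + _).
by rewrite addrC !addrA (addrAC a1 a4 a2) (addrAC (a1 + a2) a4 a3).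
Qed.

Unset Implicit Arguments.
Set Strict Implicit.

Theorem theorem2p10 (K : fieldType) (g V : lmodType K)
    (br : g -> g -> g) (rhoL rhoR : g -> V -> V) (T : V -> g) :
  is_leibniz br ->
  is_rep br rhoL rhoR ->
  is_relRB br rhoL rhoR T ->
  forall (n : nat) (f : seq V -> g), (1 <= n)%N -> multilinear n f ->
  forall s : seq V, size s = n.+1 ->
    dT br rhoL rhoR T n f s =
      (-1) ^+ n.-1 *: lbracket br rhoL rhoR 1 n (cochain1 T) f s.
Proof.
move=> _ _ _ n f n1 fml s hs.
rewrite /lbracket !big_nat1.
set v := varg s.
rewrite (@E1 K g V rhoL T f v n) (@E2 K g V rhoR T f v n n1) (@E3 K g V br T f v n n1)
  (@E4 K g V br T f v n n1).
under eq_big_nat => k hk do rewrite (@E5 K g V rhoL T f v n k hk).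
under [X in _ + X]eq_big_nat => k hk do rewrite (@E6 K g V rhoR T f v n k hk).
rewrite /dT -/v.
have h1 : \sum_(1 <= i < n.+1) (-1) ^+ i.+1 *: br (T (v i)) (f [seq v j | j <- iota 1 n.+1 & j != i])
  = (-1) ^+ n.-1 *: ((-1) ^+ (1 * n + 1) *: \sum_(i < n) (-1) ^+ i *:
      br (T (v i.+1)) (f [seq v j | j <- iota 1 n.+1 & j != i.+1])).
  rewrite big_add1 /= big_mkord !scaler_sumr; apply: eq_bigr => i _.
  by rewrite (@sgn3 _ _ _ _ _ _ i.+2) //; lia.
have h2 : - \sum_(1 <= i < n.+1) (-1) ^+ i.+1 *: T (rhoR (f [seq v j | j <- iota 1 n.+1 & j != i]) (v i))
  = (-1) ^+ n.-1 *: ((-1) ^+ (2 * n) *: \sum_(i < n) (-1) ^+ (n + i) *: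
      T (rhoR (f [seq v j | j <- iota 1 n.+1 & j != i.+1]) (v i.+1))).
  rewrite -sumrN big_add1 /= big_mkord !scaler_sumr; apply: eq_bigr => i _.
  rewrite -scaleN1r -[X in X *: (_ *: _)]expr1 (@sgn2 _ _ _ _ _ i.+3) //.
  by rewrite (@sgn3 _ _ _ _ _ _ i.+3) //; lia.
have h3 : (-1) ^+ n.+1 *: br (f [seq v j | j <- iota 1 n]) (T (v n.+1)) =
  (-1) ^+ n.-1 *: ((-1) ^+ (1.-1 * n) *: br (f [seq v j | j <- iota 1 n]) (T (v n.+1))).
  by rewrite (@sgn2 _ _ _ _ _ n.+1) //; lia.
have h4 : (-1) ^+ n *: T (rhoL (f [seq v j | j <- iota 1 n]) (v n.+1)) =
  (-1) ^+ n.-1 *: ((-1) ^+ (1.-1 * n + 1) *: T (rhoL (f [seq v j | j <- iota 1 n]) (v n.+1))).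
  by rewrite (@sgn2 _ _ _ _ _ n) //; lia.
rewrite h1 h2 h3 h4.
set S5 := \sum_(1 <= k < n.+1) _ *: _.
set S6 := \sum_(1 <= k < n.+1) _ *: _.
rewrite -/S5.
have h5 : \sum_(1 <= i < n.+2) \sum_(i.+1 <= j < n.+2) (-1) ^+ i *:
        f ([seq v l | l <- iota 1 j.-1 & l != i] ++
           rhoL (T (v i)) (v j) + rhoR (T (v j)) (v i)
           :: [seq v l | l <- iota j.+1 (n.+1 - j)]) = (-1) ^+ n.-1 *: (S5 + S6).
  rewrite tri big_nat_recl // [X in X + _]big_geq // add0r /S5 /S6 -big_split scaler_sumr /=.
  apply: eq_big_nat => k /andP[k1 kn].
  rewrite big_add1 /= big_mkord !scaler_sumr -big_split scaler_sumr; apply: eq_bigr => i _.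
  rewrite scalerDr (@sgn3 _ _ _ _ _ _ i.+1); last by lia.
  rewrite (@sgn3 _ _ _ _ _ _ i.+1); last by lia.
  rewrite -scalerDr subSS (@fadd _ _ _ n f _ _ _ _ fml) //.
  rewrite size_map size_filter_iota; last by have := ltn_ord i.
  rewrite size_map size_iota; lia.
rewrite h5 !scalerDr; apply: addr_AC6.
Qed.
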